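(* Let $x,y$ be non-commuting indeterminates and $C=xyx^{-1}y^{-1}$. Let $(R_n)_{n\in\mathbb Z}$ satisfy $$R_{2n}CR_{2n-2}=1+R_{2n-1},\qquad R_{2n+1}CR_{2n-1}=1+R_{2n}^4\qquad(n\in\mathbb Z),$$ with $R_0=yxy^{-1}$ and $R_1=y$, and set $u_n=R_{2n}$. Let $$y_1=(1+y)x^{-1}yx^{-1}y^{-1},$$ $$y_2=\big(x^2+(1+y)x^{-2}(1+y)\big)y^{-1}x^{-1}yx^{-1}y^{-1},$$ $$y_3=\big(x^3+(1+y)x^{-1}\big)x^{-1}y^{-1}.$$ Then for every $n\ge0$, $u_nu_0^{-1}$ equals the sum over all Motzkin paths of height at most $1$ from $(0,0)$ to $(n,0)$ of their weights. Such a path is a sequence of points in $\mathbb Z\times\{0,1\}$ in which each step is $(a,h)\to(a+1,h)$ (horizontal) or $(a,h)\to(a+1,1-h)$ (up or down). The weight of a path is the product, in the order of the steps, of: - $y_1$ for each horizontal step at height $0$; - $1$ for each up step; - $y_2$ for each down step; - $y_3$ for each horizontal step at height $1$.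
   Context: Work in the free skew field (non-commutative rational functions) over $\mathbb C$ generated by $x,y$. *)

(* Defs.v *)
From HB Require Import structures.
From mathcomp Require Import all_boot all_order all_algebra.
From mathcomp Require Import complex reals.
Set Implicit Arguments. Unset Strict Implicit. Unset Printing Implicit Defensive.
Import Order.TTheory GRing.Theory Num.Theory.
Local Open Scope ring_scope.

Notation Cplx R := (complex (R : realType)).

Definition is_division_ring (D : unitRingType) : Prop :=
  forall z : D, z != 0 -> z \is a GRing.unit.

Section Weights.
Variables (D : unitRingType) (x y : D).

Definition commC : D := x * y * x^-1 * y^-1.

Definition wy1 : D := (1 + y) * x^-1 * y * x^-1 * y^-1.
Definition wy2 : D :=
  (x ^+ 2 + (1 + y) * x^-2 * (1 + y)) * y^-1 * x^-1 * y * x^-1 * y^-1.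
Definition wy3 : D := (x ^+ 3 + (1 + y) * x^-1) * x^-1 * y^-1.

(* Heights: false = 0, true = 1.  Weight of a step from height a to height b. *)
Definition step_weight (a b : bool) : D :=
  match a, b with
  | false, false => wy1
  | false, true  => 1
  | true, false  => wy2
  | true, true   => wy3
  end.

(* A Motzkin path of height <= 1 from (0,0) to (n,0) is encoded by its
   sequence of heights h : 'I_(n+1) -> {0,1} with h 0 = h n = 0. *)
Definition motzkin1 (n : nat) (h : {ffun 'I_n.+1 -> bool}) : bool :=
  ~~ h ord0 && ~~ h ord_max.

Definition path_weight (n : nat) (h : {ffun 'I_n.+1 -> bool}) : D :=
  \prod_(i < n) step_weight (h (inord i)) (h (inord i.+1)).

Definition motzkin1_sum (n : nat) : D :=
  \sum_(h : {ffun 'I_n.+1 -> bool} | motzkin1 h) path_weight h.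

End Weights.

(* Main.v *)
From HB Require Import structures.
From mathcomp Require Import all_boot all_order all_algebra.
From mathcomp Require Import complex reals.
From mathcomp Require Import zify.
Require Import Defs.
Import Order.TTheory GRing.Theory Num.Theory.
Set Implicit Arguments. Unset Strict Implicit. Unset Printing Implicit Defensive.
Local Open Scope ring_scope.
Lemma qc_step (D : unitRingType) (a b c K P : D) :
  a \is a GRing.unit -> K \is a GRing.unit ->
  P * b = b * P -> c * K * a = P -> b * K * a = a * b -> c * K * b = b * c.
Proof.
move=> ha hK hPb hc hb.
have ec : c = P * a^-1 * K^-1 by rewrite -hc !mulrK.
have e : a^-1 * b * K = b * a^-1.
  have -> : a^-1 * b * K = a^-1 * (b * K * a) * a^-1 by rewrite !mulrA mulrK.
  by rewrite hb mulKr.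
rewrite ec mulrVK // !mulrA -hPb -[in RHS](mulrA P) -e !mulrA mulrK //.
Qed.

Lemma L2gen (D : unitRingType) (q r t p s K : D) :
  q \is a GRing.unit -> r \is a GRing.unit -> t \is a GRing.unit ->
  K \is a GRing.unit ->
  r * K * q = 1 + t -> t * K * s = 1 + q ^+ 4 -> q * K * p = 1 + s ->
  r * K * t = t * r -> t * K * q = q * t ->
  q * (r ^+ 2 * t^-1 + t^-1 * q ^+ 2) = r * K + p.
Proof.
move=> hq hr ht hK h1 h2 h3 h4 h5.
have ep : p = K^-1 * q^-1 * (1 + s).
  by rewrite -h3 !mulrA mulrVK // mulVr // mul1r.
have es : s = K^-1 * t^-1 * (1 + q ^+ 4).
  by rewrite -h2 !mulrA mulrVK // mulVr // mul1r.
have ei : q^-1 * K^-1 * t^-1 = t^-1 * q^-1.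
  have : (t * K * q)^-1 = (q * t)^-1 by rewrite h5.
  by rewrite invrM ?unitrMl // invrM // invrM // mulrA.
have f1 : q * r * K = 1 + t * K.
  apply: (mulIr hq).
  by rewrite -!mulrA (mulrA r) h1 mulrDl mulrDr mul1r mulr1 -(mulrA t) (mulrA t) h5.
have f2 : r * t^-1 = t^-1 * r * K.
  have -> : t^-1 * r * K = t^-1 * (r * K * t) * t^-1 by rewrite !mulrA mulrK.
  by rewrite h4 mulrA mulVr // mul1r.
have f3 : q * t^-1 = K^-1 * t^-1 * q.
  have -> : K^-1 * t^-1 * q = K^-1 * t^-1 * (q * t) * t^-1 by rewrite !mulrA mulrK.
  by rewrite -h5 !mulrA mulrVK // mulVr // mul1r.
have f4 : r * K = (1 + t) * q^-1 by rewrite -h1 mulrK.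
have g0 : q * r * t^-1 = K^-1 * t^-1 * (1 + t * K).
  by rewrite -f1 -(mulrA q) f2 !mulrA f3.
have g1 : q * (r ^+ 2 * t^-1) = K^-1 * t^-1 * q^-1 + K^-1 * q^-1 + r * K.
  rewrite expr2 -(mulrA r) f2 !mulrA g0 mulrDr mulr1 mulrA mulrVK // mulVr // mulrDl mulrDl !mul1r -(mulrA _ r K) f4 mulrDl mul1r mulrDr (mulrA _ t) mulrVK //.
have e2 : K^-1 / q * (K^-1 / t) = K^-1 * (q^-1 / K / t) by rewrite !mulrA.
rewrite mulrDr g1 mulrA f3 -(mulrA _ q) -exprS ep es mulrDr mulr1 mulrA e2 ei.
rewrite mulrDr mulr1 (exprS q 3) !mulrA mulrVK //.
by rewrite !addrA; congr (_ + _); rewrite addrC -addrA (addrC (K^-1 / q)).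
Qed.

Lemma L1gen (D : unitRingType) (q r t w z K : D) :
  q \is a GRing.unit -> r \is a GRing.unit -> t \is a GRing.unit ->
  K \is a GRing.unit ->
  w * K * r = 1 + z -> z * K * t = 1 + r ^+ 4 ->
  r * K * t = t * r -> r * K * q = 1 + t ->
  r * (r ^+ 2 * t^-1 + t^-1 * q ^+ 2) = w * K + q.
Proof.
move=> hq hr ht hK g1 g2 h4 h1.
have ew : w * K = (1 + z) * r^-1 by rewrite -g1 mulrK.
have ez : z = (1 + r ^+ 4) * t^-1 * K^-1 by rewrite -g2 !mulrK.
have ei : t^-1 * K^-1 * r^-1 = r^-1 * t^-1.
  have : (r * K * t)^-1 = (t * r)^-1 by rewrite h4.
  by rewrite invrM ?unitrMl // invrM // invrM // mulrA.
have f2 : r * t^-1 = t^-1 * r * K.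
  have -> : t^-1 * r * K = t^-1 * (r * K * t) * t^-1 by rewrite !mulrA mulrK.
  by rewrite h4 mulrA mulVr // mul1r.
have eq : t^-1 * q = r^-1 * t^-1 * (1 + t).
  have -> : q = K^-1 * r^-1 * (1 + t) by rewrite -h1 !mulrA mulrVK // mulVr // mul1r.
  by rewrite !mulrA ei.
have e3 : t^-1 * r * K * q = t^-1 * (1 + t) by rewrite -h1 !mulrA.
have e4 : (1 + r ^+ 4) / t / K / r = (1 + r ^+ 4) * (r^-1 * t^-1) by rewrite -ei !mulrA.
rewrite mulrDr mulrA -exprS mulrA f2 expr2 mulrA e3 ew ez.
rewrite mulrDr mulr1 mulVr // mulrDl mul1r eq mulrDr mulr1 mulrVK //.
rewrite mulrDl mul1r e4 mulrDl mul1r (exprSr r 3) !mulrA mulrK //.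
by rewrite !addrA; congr (_ + _); rewrite addrC (addrC (r ^+ 3 / t)) addrA.
Qed.

Ltac move_front a :=
  repeat (first [ rewrite [in RHS](addrCA _ a) | rewrite [in RHS](addrC _ a) ]).
Ltac acs_rec :=
  lazymatch goal with
  | |- ?a + ?l = _ => move_front a; congr (_ + _); acs_rec
  | |- _ => reflexivity
  end.
Ltac acs := rewrite -?addrA; acs_rec.

Lemma core (D : ringType) (a b z yi : D) :
  a * b = 1 -> b * a = 1 -> z * yi = yi + 1 -> yi * z = yi + 1 ->
  (a + z * b * z) * yi * b * z + (a + z * b * z) * yi * a
  = (a + z * b) * yi * (a + z * b * z).
Proof.
move=> ab ba zy yz.
have e1 : z * b * z * yi = z * b * yi * z by rewrite -!mulrA zy yz.
have r2 : a * yi * z * b * z = a * yi * b * z + z.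
  by rewrite -(mulrA a) yz mulrDr mulr1 !mulrDl ab mul1r.
have t4 : z * b * yi * z * a = z * b * yi * a + z.
  by rewrite -(mulrA _ yi) yz mulrDr mulr1 mulrDl -(mulrA z b a) ba mulr1.
rewrite !mulrDl !mulrDr !mulrA e1 r2 t4.
acs.
Qed.

Section Conc.
Variables (D : unitRingType) (x y : D).
Hypotheses (hx : x \is a GRing.unit) (hy : y \is a GRing.unit).

Lemma CR0 : commC x y * (y * x * y^-1) = x.
Proof. by rewrite /commC !mulrA mulrVK // mulrVK // mulrK. Qed.

Lemma Cyx : commC x y * (y * x) = x * y.
Proof. by rewrite /commC !mulrA mulrVK // mulrVK. Qed.

Lemma Y0 : wy1 x y * (y * x * y^-1) = (1 + y) * x^-1.
Proof. by rewrite /wy1 !mulrA mulrVK // mulrVK // mulrK. Qed.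

Lemma unit_yx : y * x \is a GRing.unit.
Proof. by rewrite unitrMl. Qed.

Lemma zyC : y^-1 * (1 + y) = (1 + y) * y^-1.
Proof. by rewrite mulrDr mulrDl mulr1 mul1r mulVr // mulrV. Qed.

Lemma zyK (P : D) : P * y^-1 * (1 + y) * y = P * (1 + y).
Proof. by rewrite -(mulrA P) zyC mulrA mulrVK. Qed.

Lemma Y1 : (1 + y) * x^-1 * (((1 + y) * x^-1) ^+ 2 * y^-1 + y^-1 * (y * x * y^-1) ^+ 2)
   - y * x * y^-1
   = (wy1 x y * ((1 + y) * x^-1) + wy2 x y * (y * x * y^-1)) * commC x y.
Proof.
apply: (mulIr unit_yx).
rewrite -(mulrA _ (commC x y)) Cyx mulrBl -(mulrA _ _ (y * x)).
have eP : (((1 + y) * x^-1) ^+ 2 * y^-1 + y^-1 * (y * x * y^-1) ^+ 2) * (y * x)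
   = (1 + y) * x^-1 * (1 + y) + x * x * x.
  by rewrite !expr2 mulrDl !mulrA !mulrVK // mulVr // mul1r.
have e0 : y * x * y^-1 * (y * x) = y * x * x by rewrite mulrA mulrVK.
have eA : wy1 x y * ((1 + y) * x^-1) * (x * y) = (1 + y) * x^-1 * y * x^-1 * (1 + y).
  by rewrite /wy1 !mulrA mulrVK // zyK.
have eB : wy2 x y * (y * x * y^-1) * (x * y) = x * x + (1 + y) * x^-1 * x^-1 * (1 + y).
  by rewrite /wy2 !mulrA mulrVK // mulrVK // mulrK // mulrVK // mulrVK // expr2 invrM // !mulrA.
rewrite eP e0 [RHS]mulrDl eA eB.
have hW : forall a : D, a * ((1 + y) / x * (1 + y)) = a / x * (1 + y) + a * y / x * (1 + y).
  by move=> a; rewrite !mulrA (mulrDr a 1 y) mulr1 mulrDl mulrDl.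
set a := (1 + y) / x.
have hX : a * (x * x * x) = x * x + y * x * x.
  by rewrite /a !mulrA mulrVK // mulrDl mulrDl mul1r.
rewrite mulrDr hW hX !addrA addrK.
by rewrite -[RHS]addrA (addrC (a / x * (1 + y))) -addrA (addrC (a / x * (1 + y))).
Qed.

Lemma Y2 : wy2 x y * (y * x * y^-1) * (((1 + y) * x^-1) ^+ 2 * y^-1 + y^-1 * (y * x * y^-1) ^+ 2)
   = (wy2 x y * ((1 + y) * x^-1) + wy3 x y * wy2 x y * (y * x * y^-1)) * commC x y.
Proof.
apply: (mulIr unit_yx).
rewrite -(mulrA _ (commC x y)) Cyx [RHS]mulrDl -(mulrA _ _ (y * x)).
have eP : (((1 + y) * x^-1) ^+ 2 * y^-1 + y^-1 * (y * x * y^-1) ^+ 2) * (y * x)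
   = (1 + y) * x^-1 * (1 + y) + x * x * x.
  by rewrite !expr2 mulrDl !mulrA !mulrVK // mulVr // mul1r.
set G := x * x + (1 + y) * x^-1 * x^-1 * (1 + y).
have eB0 : wy2 x y * (y * x * y^-1) = G * y^-1 * x^-1.
  by rewrite /wy2 !mulrA mulrVK // mulrVK // mulrK // expr2 invrM // !mulrA.
have eA2 : wy2 x y * ((1 + y) * x^-1) * (x * y) = G * y^-1 * x^-1 * y * x^-1 * (1 + y).
  by rewrite /wy2 !mulrA mulrVK // zyK expr2 invrM // !mulrA.
have eW3 : wy3 x y = (x * x + (1 + y) * x^-1 * x^-1) * y^-1.
  by rewrite /wy3 mulrDl (exprSr x 2) mulrK // expr2 !mulrA.
have eC : wy3 x y * wy2 x y * (y * x * y^-1) * (x * y) = wy3 x y * G.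
  by rewrite -(mulrA (wy3 x y)) eB0 !mulrA mulrVK // mulrVK.
have hW : forall a : D, a * ((1 + y) / x * (1 + y)) = a / x * (1 + y) + a * y / x * (1 + y).
  by move=> a; rewrite !mulrA (mulrDr a 1 y) mulr1 mulrDl mulrDl.
have hX : G * y^-1 * x^-1 * (x * x * x) = G * y^-1 * x * x by rewrite !mulrA mulrVK.
rewrite eP eB0 eA2 eC mulrDr hW hX eW3.
have ab : x * x * (x^-1 * x^-1) = 1 by rewrite mulrA mulrK // mulrV.
have ba : x^-1 * x^-1 * (x * x) = 1 by rewrite mulrA mulrVK // mulVr.
have zy : (1 + y) * y^-1 = y^-1 + 1 by rewrite mulrDl mul1r mulrV.
have yz : y^-1 * (1 + y) = y^-1 + 1 by rewrite mulrDr mulr1 mulVr.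
have hc := @core _ _ _ _ _ ab ba zy yz.
rewrite !mulrA in hc.
rewrite /G -hc.
acs.
Qed.
End Conc.

Section Paths.
Variables (D : unitRingType) (x y : D).

Definition Send (n : nat) (e : bool) : D :=
  \sum_(h : {ffun 'I_n.+1 -> bool} | ~~ h ord0 && (h ord_max == e)) path_weight x y h.

Lemma motz_Send n : motzkin1_sum x y n = Send n false.
Proof.
by apply: eq_bigl => h; rewrite /motzkin1 eqbF_neg.
Qed.

Lemma Send0 e : Send 0 e = (if e then 0 else 1).
Proof.
have om : ord_max = ord0 :> 'I_1 by apply: val_inj.
rewrite /Send om; case: e.
  by rewrite big_pred0 // => h; case: (h ord0).
rewrite (big_pred1 [ffun=> false]).
  by rewrite /path_weight big_ord0.
move=> h /=; apply/idP/eqP.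
  move=> /andP [h0 _]; apply/ffunP => i; rewrite ffunE (ord1 i).
  by apply/negbTE.
by move=> ->; rewrite !ffunE.
Qed.

Section Ext.
Variable n : nat.
Definition ext (p : {ffun 'I_n.+1 -> bool} * bool) : {ffun 'I_n.+2 -> bool} :=
  [ffun i : 'I_n.+2 => if (i < n.+1)%N then p.1 (inord i) else p.2].
Definition res (h : {ffun 'I_n.+2 -> bool}) : {ffun 'I_n.+1 -> bool} * bool :=
  ([ffun i : 'I_n.+1 => h (inord i)], h ord_max).

Lemma ext_lt p (i : nat) : (i < n.+1)%N -> ext p (inord i) = p.1 (inord i).
Proof. by move=> hi; rewrite ffunE inordK ?hi // ltnS ltnW. Qed.

Lemma ext_max p : ext p ord_max = p.2.
Proof. by rewrite ffunE /= ltnn. Qed.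

Lemma ext_bij : bijective ext.
Proof.
exists res.
  case=> h b; rewrite /res ext_max; congr (_, _).
  by apply/ffunP => i; rewrite ffunE ext_lt // inord_val.
move=> h; apply/ffunP => i; rewrite ffunE /=.
case: ifP => hi.
  by rewrite ffunE; congr (h _); apply: val_inj; rewrite /= inordK // inordK.
congr (h _); apply: val_inj => /=.
by move: (ltn_ord i) hi; rewrite ltnS leq_eqVlt => /orP [/eqP -> // | ->].
Qed.

Lemma ext0 p : ext p ord0 = p.1 ord0.
Proof. by rewrite ffunE /=; congr (p.1 _); apply: val_inj; rewrite /= inordK. Qed.

Lemma pw_ext p : path_weight x y (ext p) = path_weight x y p.1 * step_weight x y (p.1 ord_max) p.2.
Proof.
rewrite /path_weight big_ord_recr /=.
rewrite (eq_bigr (fun i : 'I_n => step_weight x y (p.1 (inord i)) (p.1 (inord i.+1)))); last first.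
  move=> i _; rewrite !ext_lt //; first by rewrite ltnS ltn_ord.
  by rewrite ltnS ltnW ?ltn_ord.
rewrite ext_lt // (_ : inord n.+1 = ord_max); last by apply: val_inj; rewrite /= inordK.
rewrite ext_max (_ : inord n = ord_max) //; apply: val_inj; rewrite /= inordK //.
Qed.
End Ext.

Lemma SendS n e : Send n.+1 e = Send n false * step_weight x y false e + Send n true * step_weight x y true e.
Proof.
rewrite /Send (reindex (@ext n)) /=; last by apply: onW_bij; apply: ext_bij.
rewrite (eq_bigl (fun p : {ffun 'I_n.+1 -> bool} * bool => ~~ p.1 ord0 && (p.2 == e))); last by move=> p; rewrite ext0 ext_max.
rewrite (eq_bigr (fun p : {ffun 'I_n.+1 -> bool} * bool => path_weight x y p.1 * step_weight x y (p.1 ord_max) p.2)); last first.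
  by move=> p _; rewrite pw_ext.
rewrite -(pair_big (fun h : {ffun 'I_n.+1 -> bool} => ~~ h ord0) (fun b => b == e)
   (fun h b => path_weight x y h * step_weight x y (h ord_max) b)) /=.
rewrite (eq_bigr (fun h : {ffun 'I_n.+1 -> bool} => path_weight x y h * step_weight x y (h ord_max) e)); last first.
  by move=> h _; rewrite big_pred1_eq.
rewrite (bigID (fun h : {ffun 'I_n.+1 -> bool} => h ord_max)) /= addrC.
congr (_ + _).
  rewrite mulr_suml; apply: eq_big => h; first by case: (h ord_max); rewrite ?andbT ?andbF.
  by move=> /andP [_ /negbTE ->].
rewrite mulr_suml; apply: eq_big => h; first by case: (h ord_max); rewrite ?andbT ?andbF.
by move=> /andP [_ ->].
Qed.
End Paths.

Lemma final (D : unitRingType) (x y : D) (hx : x \is a GRing.unit) (hy : y \is a GRing.unit)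
  (v : nat -> D) (v0 : v 0%N = y * x * y^-1) (v1 : v 1%N = (1 + y) * x^-1)
  (rec : forall k, v k.+2 * commC x y = v k.+1 *
     (((1 + y) * x^-1) ^+ 2 * y^-1 + y^-1 * (y * x * y^-1) ^+ 2) - v k) :
  forall k, v k = Send x y k false * (y * x * y^-1).
Proof.
have hC : commC x y \is a GRing.unit.
  by rewrite /commC unitrMl ?unitrV // unitrMl ?unitrV // unitrMl.
suff H : forall k, v k = Send x y k false * (y * x * y^-1) /\ v k.+1 = Send x y k false * ((1 + y) * x^-1) + Send x y k true * (wy2 x y * (y * x * y^-1)).
  by move=> k; case: (H k).
elim=> [|k [IH1 IH2]].
  by rewrite !Send0 v0 v1 !mul1r mul0r addr0.
have A1 : Send x y k.+1 false * (y * x * y^-1) = v k.+1.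
  by rewrite SendS (_ : step_weight x y false false = wy1 x y) // (_ : step_weight x y true false = wy2 x y) // mulrDl -(mulrA (Send x y k false)) -(mulrA (Send x y k true)) Y0 // IH2.
split; first by rewrite A1.
apply: (mulIr hC).
rewrite rec IH1 IH2.
have e : (Send x y k false * ((1 + y) * x^-1) + Send x y k true * (wy2 x y * (y * x * y^-1))) *
   (((1 + y) * x^-1) ^+ 2 * y^-1 + y^-1 * (y * x * y^-1) ^+ 2) - Send x y k false * (y * x * y^-1)
   = Send x y k false * ((1 + y) * x^-1 * (((1 + y) * x^-1) ^+ 2 * y^-1 + y^-1 * (y * x * y^-1) ^+ 2) - y * x * y^-1)
     + Send x y k true * (wy2 x y * (y * x * y^-1) * (((1 + y) * x^-1) ^+ 2 * y^-1 + y^-1 * (y * x * y^-1) ^+ 2)).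
  by rewrite mulrDl mulrBr -!mulrA addrAC.
rewrite e Y1 // Y2 // SendS SendS.
rewrite (_ : step_weight x y false false = wy1 x y) // (_ : step_weight x y true false = wy2 x y) //.
rewrite (_ : step_weight x y false true = 1) // (_ : step_weight x y true true = wy3 x y) //.
set U1 := (1 + y) * x^-1.
set U0 := y * x * y^-1.
rewrite !mulrDl !mulrDr !mulrA mulr1.
acs.
Qed.

Theorem theorem4p5 (R : realType) (D : unitAlgType (Cplx R))
  (hD : is_division_ring D) (x y : D)
  (hx : x \is a GRing.unit) (hy : y \is a GRing.unit)
  (Rs : int -> D) (hRs : forall k : int, Rs k != 0)
  (hev : forall n : int,
     Rs (2 * n) * commC x y * Rs (2 * n - 2) = 1 + Rs (2 * n - 1))
  (hodd : forall n : int,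
     Rs (2 * n + 1) * commC x y * Rs (2 * n - 1) = 1 + Rs (2 * n) ^+ 4)
  (h0 : Rs 0 = y * x * y^-1) (h1 : Rs 1 = y) :
  forall n : nat, Rs (2 * n%:Z) * (Rs 0)^-1 = motzkin1_sum x y n.
Proof.
have hC : commC x y \is a GRing.unit.
  by rewrite /commC unitrMl ?unitrV // unitrMl ?unitrV // unitrMl.
have hU : forall k, Rs k \is a GRing.unit by move=> k; apply: hD.
pose u := fun m : int => Rs (2 * m).
pose s := fun m : int => Rs (2 * m - 1).
have hev' : forall m, u m * commC x y * u (m - 1) = 1 + s m.
  by move=> m; rewrite /u /s -hev; congr (_ * _ * Rs _); lia.
have hodd' : forall m, s (m + 1) * commC x y * s m = 1 + u m ^+ 4.
  by move=> m; rewrite /u /s -hodd; congr (Rs _ * _ * _); lia.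
have U0 : u 0 = y * x * y^-1 by rewrite /u mulr0 h0.
have S1 : s 1 = y by rewrite /s (_ : 2 * 1 - 1 = 1) // h1.
have U1 : u 1 = (1 + y) * x^-1.
  have := hev' 1; rewrite (_ : 1 - 1 = 0) // U0 S1 -mulrA CR0 // => e.
  by rewrite -e mulrK.
have Q : forall k : nat,
    s (k%:Z + 1) * commC x y * u k%:Z = u k%:Z * s (k%:Z + 1) /\
    u (k%:Z + 1) * commC x y * s (k%:Z + 1) = s (k%:Z + 1) * u (k%:Z + 1).
  elim=> [|k [IHa IHb]].
    have -> : (0%:Z + 1) = 1 by [].
    have q0 : s 1 * commC x y * u 0 = u 0 * s 1.
      by rewrite S1 U0 -mulrA CR0 // mulrVK.
    split=> //.
    apply: (qc_step (P := 1 + s 1) (hU _) hC).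
    - by rewrite mulrDl mulrDr mul1r mulr1.
    - by have := hev' 1; rewrite (_ : 1 - 1 = 0) //; apply.
    - exact: q0.
  have -> : (k.+1)%:Z = k%:Z + 1 by lia.
  set m := k%:Z.
  have qa : s (m + 1 + 1) * commC x y * u (m + 1) = u (m + 1) * s (m + 1 + 1).
    apply: (qc_step (P := 1 + u (m + 1) ^+ 4) (hU _) hC _ (hodd' (m + 1)) IHb).
    by rewrite mulrDl mulrDr mul1r mulr1 -exprSr exprS.
  split=> //.
  apply: (qc_step (P := 1 + s (m + 1 + 1)) (hU _) hC _ _ qa).
  - by rewrite mulrDl mulrDr mul1r mulr1.
  - by have := hev' (m + 1 + 1); rewrite addrK; apply.
pose Phi := fun m : int => u (m + 1) ^+ 2 * (s (m + 1))^-1 + (s (m + 1))^-1 * u m ^+ 2.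
have L1 : forall k : nat, u (k%:Z + 1) * Phi k%:Z = u (k%:Z + 1 + 1) * commC x y + u k%:Z.
  move=> k; have [qa qb] := Q k.
  apply: (L1gen (hU _) (hU _) (hU _) hC _ (hodd' (k%:Z + 1)) qb).
  - by have := hev' (k%:Z + 1 + 1); rewrite addrK; apply.
  - by have := hev' (k%:Z + 1); rewrite addrK; apply.
have L2 : forall k : nat, u (k%:Z + 1) * Phi (k%:Z + 1) = u (k%:Z + 1 + 1) * commC x y + u k%:Z.
  move=> k; have [qa qb] := Q k.+1.
  have e : (k.+1)%:Z = k%:Z + 1 by lia.
  rewrite e in qa qb.
  rewrite -[u k%:Z in RHS](_ : u (k%:Z + 1 - 1) = u k%:Z); last by rewrite addrK.
  apply: (L2gen (hU _) (hU _) (hU _) hC _ (hodd' (k%:Z + 1)) (hev' (k%:Z + 1)) qb qa).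
  by have := hev' (k%:Z + 1 + 1); rewrite addrK; apply.
have Pc : forall k : nat, Phi k%:Z = Phi 0.
  elim=> [|k IH] //.
  rewrite (_ : (k.+1)%:Z = k%:Z + 1); last by lia.
  rewrite -IH; apply: (mulrI (hU (2 * (k%:Z + 1)))).
  by rewrite [LHS]L2 [RHS]L1.
have P0 : Phi 0 = ((1 + y) * x^-1) ^+ 2 * y^-1 + y^-1 * (y * x * y^-1) ^+ 2.
  by rewrite /Phi (_ : 0 + 1 = 1) // U1 S1 U0.
have fin := @final _ x y hx hy (fun k : nat => u k%:Z) U0 U1.
have rec : forall k : nat, u (k.+2)%:Z * commC x y =
    u (k.+1)%:Z * (((1 + y) * x^-1) ^+ 2 * y^-1 + y^-1 * (y * x * y^-1) ^+ 2) - u k%:Z.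
  move=> k; rewrite -P0 -(Pc k).
  rewrite (_ : (k.+2)%:Z = k%:Z + 1 + 1); last by lia.
  rewrite (_ : (k.+1)%:Z = k%:Z + 1); last by lia.
  by rewrite L1 addrK.
move=> n; rewrite h0 motz_Send.
have := fin rec n; rewrite /u => ->.
by rewrite mulrK // -h0.
Qed.
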